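(* Let $(x_1,\dots,x_n)\in[c]^n$ be any token sequence. Suppose $\mathcal V=\{\boldsymbol v_k\}_{k=1}^n\in(\mathbb R^d)^n$ is a good sequence converging to $\mathcal Z=\{\boldsymbol z_x\}_{x\in[c]}$ with parameter $\gamma$, and $\boldsymbol A=\{a_{k,j}\}_{k,j\in[n]}$ is a nice attention map with parameter $\psi$ that reflects a function $f:[c]\to[c]$ in the sense that for all $k,j\in[n]$, $a_{k,j}>0$ implies $x_j=f(x_k)$. Then $\boldsymbol A\mathcal V$ is a good sequence converging to $\mathcal Z'=\{\boldsymbol z_{f(x)}\}_{x\in[c]}$ with parameter $2\gamma\psi+c(\gamma+2N)$, where $N=\max_{x\in[c]}\|\boldsymbol z_x\|$.
   Context: Good sequence (relative to the token sequence): $\{\boldsymbol u_k\}_{k=1}^n\subset\mathbb R^d$ is a good sequence converging to $\{\boldsymbol z_x\}_{x\in[c]}$ with parameter $\gamma>0$ if $\|\boldsymbol u_k-\boldsymbol z_{x_k}\|\le\gamma/\sqrt k$ for all $k\in[n]$ (Euclidean norm). Attention map: $\boldsymbol A\in\mathbb R_{\ge0}^{n\times n}$ with $a_{k,j}=0$ for $j>k$ and $\sum_{j=1}^ka_{k,j}=1$ for all $k$; nice with parameter $\psi>0$ if $\sum_{i=1}^ja_{k,i}\le\psi j/k$ for all $k\in[n]$, $j\in[k]$. $\boldsymbol A\mathcal V=\{\sum_{j=1}^na_{k,j}\boldsymbol v_j\}_{k=1}^n$. *)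

(* Defs.v *)
From HB Require Import structures.
From mathcomp Require Import all_boot all_order all_algebra.
Set Implicit Arguments. Unset Strict Implicit. Unset Printing Implicit Defensive.
Import Order.TTheory GRing.Theory Num.Theory.
Local Open Scope ring_scope.

Definition enorm (R : rcfType) (d : nat) (v : 'rV[R]_d) : R :=
  Num.sqrt (\sum_(i < d) v 0 i ^+ 2).

(* Indices k in [n] are represented by k : 'I_n, with paper index k+1. *)
Definition good_seq (R : rcfType) (n c d : nat) (x : 'I_n -> 'I_c)
  (u : 'I_n -> 'rV[R]_d) (z : 'I_c -> 'rV[R]_d) (gamma : R) : Prop :=
  forall k : 'I_n, enorm (u k - z (x k)) <= gamma / Num.sqrt (k.+1)%:R.

Definition attention_map (R : rcfType) (n : nat) (A : 'M[R]_n) : Prop :=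
  (forall k j : 'I_n, 0 <= A k j) /\
  (forall k j : 'I_n, (k < j)%N -> A k j = 0) /\
  (forall k : 'I_n, \sum_(j < n | (j <= k)%N) A k j = 1).

Definition nice (R : rcfType) (n : nat) (A : 'M[R]_n) (psi : R) : Prop :=
  forall k j : 'I_n, (j <= k)%N ->
    \sum_(i < n | (i <= j)%N) A k i <= psi * (j.+1)%:R / (k.+1)%:R.

Definition attn_apply (R : rcfType) (n d : nat) (A : 'M[R]_n)
  (v : 'I_n -> 'rV[R]_d) : 'I_n -> 'rV[R]_d :=
  fun k => \sum_(j < n) A k j *: v j.

Definition maxnorm (R : rcfType) (c d : nat) (z : 'I_c -> 'rV[R]_d) : R :=
  \big[Num.max/0]_(y < c) enorm (z y).

(* Main.v *)
Require Import Defs.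
From HB Require Import structures.
From mathcomp Require Import all_boot all_order all_algebra.
From mathcomp Require Import ring lra.
Import Order.TTheory GRing.Theory Num.Theory.
Local Open Scope ring_scope.

Lemma cs_ineq (R : rcfType) d (u w : 'I_d -> R) :
  (\sum_i u i * w i) ^+ 2 <= (\sum_i u i ^+ 2) * (\sum_i w i ^+ 2).
Proof.
set P := \sum_i u i ^+ 2; set Q := \sum_i w i ^+ 2; set S := \sum_i u i * w i.
have inner i : \sum_j (u i * w j - u j * w i) ^+ 2
   = u i ^+ 2 * Q + w i ^+ 2 * P - 2 * (u i * w i) * S.
  rewrite /P /Q /S !mulr_sumr -big_split -sumrB /=.
  by apply: eq_bigr => j _; ring.
have H : \sum_i \sum_j (u i * w j - u j * w i) ^+ 2 = 2 * (P * Q - S ^+ 2).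
  under eq_bigr => i _ do rewrite inner.
  rewrite sumrB big_split /= -!mulr_suml -mulr_sumr -/P -/Q -/S; ring.
have H0 : 0 <= \sum_i \sum_j (u i * w j - u j * w i) ^+ 2.
  by apply: sumr_ge0 => i _; apply: sumr_ge0 => j _; apply: sqr_ge0.
rewrite H in H0; lra.
Qed.

Lemma enormD (R : rcfType) d (u w : 'rV[R]_d) : enorm (u + w) <= enorm u + enorm w.
Proof.
rewrite /enorm.
set P := \sum_i u 0 i ^+ 2; set Q := \sum_i w 0 i ^+ 2; set S := \sum_i u 0 i * w 0 i.
have P0 : 0 <= P by apply: sumr_ge0 => i _; apply: sqr_ge0.
have Q0 : 0 <= Q by apply: sumr_ge0 => i _; apply: sqr_ge0.
have E : \sum_i (u + w) 0 i ^+ 2 = P + 2 * S + Q.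
  rewrite /P /Q /S mulr_sumr -!big_split /=.
  by apply: eq_bigr => i _; rewrite mxE; ring.
have HS : S <= Num.sqrt P * Num.sqrt Q.
  rewrite -sqrtrM // (le_trans (ler_norm S)) // -sqrtr_sqr ler_sqrt.
    exact: cs_ineq.
  exact: mulr_ge0.
rewrite E.
have R0 : 0 <= Num.sqrt P + Num.sqrt Q by rewrite addr_ge0 ?sqrtr_ge0.
rewrite -(ger0_norm R0) -sqrtr_sqr ler_sqrt ?sqr_ge0 //.
have eP := sqr_sqrtr P0; have eQ := sqr_sqrtr Q0.
rewrite sqrrD eP eQ. lra.
Qed.

Lemma enormZ (R : rcfType) d (a : R) (u : 'rV[R]_d) : enorm (a *: u) = `|a| * enorm u.
Proof.
rewrite /enorm -sqrtr_sqr -sqrtrM ?sqr_ge0 // mulr_sumr.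
congr Num.sqrt; apply: eq_bigr => i _; rewrite mxE; ring.
Qed.

Lemma enorm0 (R : rcfType) d : enorm (0 : 'rV[R]_d) = 0.
Proof.
rewrite /enorm big1 ?sqrtr0 // => i _; rewrite mxE; ring.
Qed.

Lemma enorm_sum (R : rcfType) d (I : Type) (r : seq I) (P : pred I) (F : I -> 'rV[R]_d) :
  enorm (\sum_(i <- r | P i) F i) <= \sum_(i <- r | P i) enorm (F i).
Proof.
apply: (big_rec2 (fun y1 y2 => enorm y1 <= y2)); first by rewrite enorm0.
move=> i y1 y2 _ H /=; apply: le_trans; first exact: enormD; exact: lerD.
Qed.
Lemma abel (R : realFieldType) (a b : nat -> R) m : forall (w : nat -> R),
  (forall i j, (i <= j)%N -> (j <= m)%N -> w j <= w i) -> 0 <= w m ->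
  (forall i, (i <= m)%N -> \sum_(j < i.+1) a j <= \sum_(j < i.+1) b j) ->
  \sum_(j < m.+1) a j * w j <= \sum_(j < m.+1) b j * w j.
Proof.
elim: m => [|m IH] w Hmon Hw Hab.
  rewrite !big_ord1; apply: ler_wpM2r => //.
  by have := Hab 0%N (leqnn 0); rewrite !big_ord1.
set c := w m.+2.-1.
have id (f : nat -> R) : \sum_(j < m.+2) f j * w j
    = \sum_(j < m.+1) f j * (w j - c) + c * \sum_(j < m.+2) f j.
  rewrite [\sum_(j < m.+2) f j * w j]big_ord_recr [\sum_(j < m.+2) f j]big_ord_recr /=.
  have -> : \sum_(j < m.+1) f j * (w j - c) = \sum_(j < m.+1) f j * w j - c * \sum_(j < m.+1) f j.
    by rewrite mulr_sumr -sumrB; apply: eq_bigr => j _; ring.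
  rewrite /c /=; ring.
rewrite !id; apply: lerD.
  apply: (IH (fun j => w j - c)).
  - move=> i j ij jm; rewrite lerD2r; apply: Hmon => //; exact: leqW.
  - by rewrite subr_ge0; apply: Hmon.
  - by move=> i im; apply: Hab; exact: leqW.
by apply: ler_wpM2l => //; apply: Hab.
Qed.

Lemma sqrt_sum_bound (R : rcfType) k :
  \sum_(j < k.+1) (Num.sqrt (j.+1)%:R)^-1 <= 2 * Num.sqrt (k.+1)%:R :> R.
Proof.
elim: k => [|k IH].
  rewrite big_ord1 sqrtr1 invr1; lra.
rewrite big_ord_recr /=.
set s := Num.sqrt (k.+2)%:R : R; set t := Num.sqrt (k.+1)%:R : R.
have s0 : 0 < s by rewrite sqrtr_gt0 ltr0n.
have t0 : 0 <= t by rewrite sqrtr_ge0.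
have e : s ^+ 2 = t ^+ 2 + 1 by rewrite !sqr_sqrtr ?ler0n // -natr1.
have ts : t <= s by rewrite ler_sqrt ?ler0n // ler_nat.
have key : s^-1 <= 2 * (s - t).
  rewrite -(ler_pM2l s0) mulfV ?gt_eqF //; have := sqr_ge0 (s - t); nra.
move: IH; rewrite -/t.
lra.
Qed.

Lemma maxnorm_ge0 (R : rcfType) c d (z : 'I_c -> 'rV[R]_d) : 0 <= maxnorm z.
Proof. rewrite /maxnorm; elim/big_rec: _ => // i y _ h; by rewrite le_max h orbT. Qed.

Theorem theorem4 (R : rcfType) (n c d : nat) (x : 'I_n -> 'I_c)
  (v : 'I_n -> 'rV[R]_d) (z : 'I_c -> 'rV[R]_d) (gamma psi : R)
  (A : 'M[R]_n) (f : 'I_c -> 'I_c) :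
  0 < gamma -> 0 < psi ->
  good_seq x v z gamma ->
  attention_map A -> nice A psi ->
  (forall k j : 'I_n, 0 < A k j -> x j = f (x k)) ->
  good_seq x (attn_apply A v) (fun y => z (f y))
    (2 * gamma * psi + c%:R * (gamma + 2 * maxnorm z)).
Proof.
move=> g0 p0 Hgood [Anneg [Atri Arow]] Hnice Hf k.
rewrite /attn_apply.
have rowsum : \sum_(j < n) A k j = 1.
  rewrite (bigID (fun j : 'I_n => (j <= k)%N)) /= Arow big1 ?addr0 // => j.
  by rewrite -ltnNge => /Atri.
have E : \sum_j A k j *: v j - z (f (x k)) = \sum_j A k j *: (v j - z (x j)).
  rewrite -[z (f (x k))]scale1r -rowsum scaler_suml -sumrB.
  apply: eq_bigr => j _; rewrite scalerBr; congr (_ - _).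
  have [->|nz] := eqVneq (A k j) 0; first by rewrite !scale0r.
  by rewrite (Hf k j) // lt_def nz Anneg.
set w := fun j : nat => gamma / Num.sqrt (j.+1)%:R.
set aN := fun j : nat => A k (insubd k j).
have S1 : enorm (\sum_j A k j *: v j - z (f (x k))) <= \sum_(j < n) aN j * w j.
  rewrite E; apply: le_trans; first exact: enorm_sum.
  apply: ler_sum => j _; rewrite enormZ ger0_norm // /aN valKd.
  by apply: ler_wpM2l => //; apply: Hgood.
have S2 : \sum_(j < n) aN j * w j = \sum_(j < k.+1) aN j * w j.
  rewrite (big_ord_widen n (fun j => aN j * w j) (ltn_ord k)).
  rewrite [LHS](bigID (fun j : 'I_n => (j < k.+1)%N)) /= [X in _ + X = _]big1 ?addr0 // => j.
  by rewrite -leqNgt /aN valKd => /Atri ->; rewrite mul0r.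
set b := fun j : nat => psi / (k.+1)%:R.
have S3 : \sum_(j < k.+1) aN j * w j <= \sum_(j < k.+1) b j * w j.
  apply: abel.
  - move=> i j ij _; rewrite /w; apply: ler_wpM2l; first exact: ltW.
    rewrite lef_pV2 ?posrE ?sqrtr_gt0 ?ltr0n // ler_sqrt ?ler0n // ler_nat.
    exact: ij.
  - by rewrite /w divr_ge0 ?sqrtr_ge0 // ltW.
  - move=> i ik.
    have iln : (i < n)%N by apply: leq_ltn_trans ik (ltn_ord k).
    have := Hnice k (Ordinal iln) ik.
    rewrite (big_ord_widen n aN iln) /b sumr_const card_ord /=.
    have -> : \sum_(i0 < n | (i0 < i.+1)%N) aN i0 = \sum_(i0 < n | (i0 <= i)%N) A k i0.
      by apply: eq_bigr => j _; rewrite /aN valKd.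
    by move=> h; apply: (le_trans h); rewrite -[psi / _ *+ _]mulr_natr mulrAC.
set s := Num.sqrt (k.+1)%:R : R.
have s0 : 0 < s by rewrite sqrtr_gt0 ltr0n.
have es : (k.+1)%:R = s ^+ 2 by rewrite sqr_sqrtr ?ler0n.
have S4 : \sum_(j < k.+1) b j * w j = psi / (k.+1)%:R * gamma * \sum_(j < k.+1) (Num.sqrt (j.+1)%:R)^-1.
  by rewrite mulr_sumr; apply: eq_bigr => j _; rewrite /b /w mulrA.
have C0 : 0 <= c%:R * (gamma + 2 * maxnorm z).
  by apply: mulr_ge0 => //; have := maxnorm_ge0 _ _ _ z; lra.
rewrite -S2 S4 in S3.
apply: (le_trans S1); apply: (le_trans S3).
apply: le_trans.
  apply: ler_wpM2l; last exact: sqrt_sum_bound.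
  by apply: mulr_ge0; [apply: divr_ge0; [apply: ltW|]|apply: ltW].
rewrite -/s es.
have -> : psi / s ^+ 2 * gamma * (2 * s) = (2 * gamma * psi) / s.
  by field; rewrite gt_eqF.
apply: ler_wpM2r; first by rewrite invr_ge0 ltW.
by rewrite lerDl.
Qed.
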